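(* Let $\mathbb{T}$ be a time scale, $I\subseteq\mathbb{R}$ an interval, $I_{\mathbb{T}}:=I\cap\mathbb{T}$, $t_0\in I_{\mathbb{T}}$, and let $p,q$ be real-valued right-dense continuous functions. Let $p_1,q_1\ge0$ be constants with $|p(t)|\le p_1$ and $|q(t)|\le q_1$ for all $t\in I_{\mathbb{T}}^{\kappa^2}$ with $t\ge t_0$, and set $k_1:=1+p_1+q_1$. If $y$ is any solution on $I_{\mathbb{T}}$ of $$y^{\Delta\Delta}(t)+p(t)y^{\Delta}(t)+q(t)y(t)=0,$$ then $$\|y(t)\|_2\le \|y(t_0)\|_2\, e_{k_1}(t,t_0)\qquad\text{for all } t\in I_{\mathbb{T}},\ t\ge t_0,$$ where $\|y(t)\|_2:=\big((y(t))^2+(y^\Delta(t))^2\big)^{1/2}$.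
   Context: A time scale $\mathbb{T}$ is a nonempty closed subset of $\mathbb{R}$; $\sigma(t):=\inf\{s\in\mathbb{T}:s>t\}$, $\mu(t):=\sigma(t)-t$, $y^\sigma=y\circ\sigma$, delta derivative $y^\Delta(t):=\lim_{s\to t}\frac{y^\sigma(t)-y(s)}{\sigma(t)-s}$, $y^{\Delta\Delta}=(y^\Delta)^\Delta$; $\mathbb{T}^{\kappa^2}$ denotes $\mathbb{T}$ with up to two left-scattered maximal points removed (iterating $\mathbb{T}^\kappa$). For a right-dense continuous $\ell$ with $1+\mu\ell\neq0$, $e_\ell(\cdot,t_0)$ is the unique solution of $\phi^\Delta=\ell\phi$, $\phi(t_0)=1$. *)

(* Defs.v *)
From Stdlib Require Import Reals.
From Coquelicot Require Import Coquelicot.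
Open Scope R_scope.

Definition time_scale (T : R -> Prop) : Prop :=
  (exists t, T t) /\ closed T.

(** Forward jump sigma(t) = inf {s in T | s > t}, with inf of the empty
    set := t (i.e. sigma(max T) = max T). *)
Definition sigma (T : R -> Prop) (t : R) : R :=
  match Glb_Rbar (fun s => T s /\ t < s) with
  | Finite x => x
  | _ => t
  end.

(** Backward jump rho(t) = sup {s in T | s < t}, with sup of empty := t. *)
Definition rho (T : R -> Prop) (t : R) : R :=
  match Lub_Rbar (fun s => T s /\ s < t) with
  | Finite x => x
  | _ => t
  end.

Definition mu (T : R -> Prop) (t : R) : R := sigma T t - t.

Definition right_dense (T : R -> Prop) (t : R) : Prop :=
  (exists s, T s /\ t < s) /\ sigma T t = t.
Definition left_dense (T : R -> Prop) (t : R) : Prop :=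
  (exists s, T s /\ s < t) /\ rho T t = t.
Definition left_scattered (T : R -> Prop) (t : R) : Prop := rho T t < t.

(** S^kappa : S with its maximum removed if that maximum is left-scattered
    (left-scatteredness measured inside S). *)
Definition kappa (S : R -> Prop) (t : R) : Prop :=
  S t /\ ~ ((forall s, S s -> s <= t) /\ left_scattered S t).

Definition delta_deriv (T : R -> Prop) (f : R -> R) (t l : R) : Prop :=
  forall eps : R, 0 < eps -> exists delta : R, 0 < delta /\
    forall s, T s -> Rabs (t - s) < delta ->
      Rabs (f (sigma T t) - f s - l * (sigma T t - s))
        <= eps * Rabs (sigma T t - s).

Definition rd_continuous (T S : R -> Prop) (f : R -> R) : Prop :=
  forall t, S t ->
    (right_dense T t ->
       forall eps, 0 < eps -> exists delta, 0 < delta /\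
         forall s, S s -> Rabs (s - t) < delta -> Rabs (f s - f t) < eps) /\
    (left_dense T t ->
       exists L, forall eps, 0 < eps -> exists delta, 0 < delta /\
         forall s, S s -> t - delta < s < t -> Rabs (f s - L) < eps).

(** phi is the exponential e_l(., t0): phi^Delta = l phi on T^kappa, phi(t0) = 1. *)
Definition is_dexp (T : R -> Prop) (l : R -> R) (t0 : R) (phi : R -> R) : Prop :=
  phi t0 = 1 /\ forall t, kappa T t -> delta_deriv T phi t (l t * phi t).

Definition is_interval (I : R -> Prop) : Prop :=
  forall a b c, I a -> I c -> a <= b <= c -> I b.

(* Main.v *)
Require Import Defs.
From Stdlib Require Import Reals Lra Psatz Classical.
From Coquelicot Require Import Coquelicot.
Open Scope R_scope.

Lemma eps_le (x y K : R) : 0 <= K -> (forall z, 0 < z -> x <= y + K * z) -> x <= y.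
Proof.
  intros HK H. destruct (Rle_dec x y) as [h|h]; auto.
  exfalso. assert (Hz : 0 < (x - y) / (2*(K+1))).
  { apply Rdiv_lt_0_compat; lra. }
  specialize (H _ Hz).
  assert (K * ((x - y) / (2 * (K + 1))) < x - y).
  { unfold Rdiv. rewrite <- Rmult_assoc.
    apply Rmult_lt_reg_r with (2*(K+1)). lra.
    rewrite Rmult_assoc, Rinv_l by lra. nra. }
  lra.
Qed.

Lemma zero_of_small (x M : R) : 0 <= M -> (forall e, 0 < e -> Rabs x <= e * M) -> x = 0.
Proof.
  intros HM H. assert (Rabs x <= 0).
  { apply eps_le with M; auto. intros z Hz. rewrite Rplus_0_l, Rmult_comm. auto. }
  pose proof (Rabs_pos x). apply Rabs_eq_0. lra.
Qed.

Lemma dd_sigma T f t l : delta_deriv T f t l -> T t ->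
  f (Defs.sigma T t) = f t + l * (Defs.sigma T t - t).
Proof.
  intros H Ht.
  assert (f (Defs.sigma T t) - f t - l * (Defs.sigma T t - t) = 0).
  { apply zero_of_small with (Rabs (Defs.sigma T t - t)). apply Rabs_pos.
    intros e He. destruct (H e He) as [d [Hd Hs]]. apply Hs; auto.
    rewrite Rminus_diag, Rabs_R0; auto. }
  lra.
Qed.

Lemma dd_cont T f t l : delta_deriv T f t l -> T t ->
  forall e, 0 < e -> exists d, 0 < d /\ forall r, T r -> Rabs (t - r) < d ->
    Rabs (f r - f t) <= e.
Proof.
  intros H Ht e He.
  set (M := Rabs (Defs.sigma T t - t)).
  assert (HM : 0 <= M) by apply Rabs_pos.
  set (eta := e / (2 * (M + 1))).
  assert (Heta : 0 < eta) by (apply Rdiv_lt_0_compat; lra).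
  destruct (H eta Heta) as [d [Hd Hs]].
  pose proof (dd_sigma T f t l H Ht) as Hsig.
  set (d' := Rmin (Rmin d 1) (e / (2 * (Rabs l + 1)))).
  assert (Hd' : 0 < d').
  { unfold d'. apply Rmin_pos. apply Rmin_pos; lra. apply Rdiv_lt_0_compat. lra.
    pose proof (Rabs_pos l); lra. }
  exists d'. split; auto. intros r Hr Htr.
  assert (Hm1 : d' <= d) by (unfold d'; eapply Rle_trans; [apply Rmin_l| apply Rmin_l]).
  assert (Hm2 : d' <= 1) by (unfold d'; eapply Rle_trans; [apply Rmin_l| apply Rmin_r]).
  assert (Hm3 : d' <= e / (2 * (Rabs l + 1))) by (unfold d'; apply Rmin_r).
  assert (H1 : Rabs (t - r) < d) by lra.
  assert (H3 : Rabs (t - r) < e / (2 * (Rabs l + 1))) by lra.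
  specialize (Hs r Hr H1).
  assert (Habs: Rabs (Defs.sigma T t - r) <= M + 1).
  { replace (Defs.sigma T t - r) with ((Defs.sigma T t - t) + (t - r)) by ring.
    eapply Rle_trans. apply Rabs_triang. unfold M; lra. }
  assert (Hb : eta * Rabs (Defs.sigma T t - r) <= e / 2).
  { apply Rle_trans with (eta * (M+1)).
    apply Rmult_le_compat_l; lra. right. unfold eta. field. lra. }
  assert (Hc : Rabs l * Rabs (t - r) <= e / 2).
  { apply Rle_trans with (Rabs l * (e / (2 * (Rabs l + 1)))).
    apply Rmult_le_compat_l. apply Rabs_pos. lra.
    pose proof (Rabs_pos l).
    apply Rle_trans with ((Rabs l + 1) * (e / (2 * (Rabs l + 1)))). nra.
    right. field. lra. }
  replace (f r - f t) with (- (f (Defs.sigma T t) - f r - l * (Defs.sigma T t - r)) + l * (r - t))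
    by (rewrite Hsig; ring).
  eapply Rle_trans. apply Rabs_triang. rewrite Rabs_Ropp, Rabs_mult, (Rabs_minus_sym r t). lra.
Qed.

Lemma dd_rd T f t l : delta_deriv T f t l -> Defs.sigma T t = t ->
  forall e, 0 < e -> exists d, 0 < d /\ forall r, T r -> t < r < t + d ->
    Rabs (f r - f t - l * (r - t)) <= e * (r - t).
Proof.
  intros H Hs e He. destruct (H e He) as [d [Hd Hh]]. exists d; split; auto.
  intros r Hr Hrt. assert (Rabs (t - r) < d) by (rewrite Rabs_left; lra).
  specialize (Hh r Hr H0). rewrite Hs in Hh.
  replace (f r - f t - l * (r - t)) with (- (f t - f r - l * (t - r))) by ring.
  rewrite Rabs_Ropp. rewrite (Rabs_left (t - r)) in Hh by lra. lra.
Qed.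

Lemma glb_ex (F : R -> Prop) (a x0 : R) : F x0 -> (forall x, F x -> a <= x) ->
  exists m, (forall x, F x -> m <= x) /\ (forall e, 0 < e -> exists x, F x /\ x < m + e).
Proof.
  intros H0 Ha.
  destruct (completeness (fun x => F (- x))) as [M [HM1 HM2]].
  { exists (- a). intros x Hx. specialize (Ha _ Hx). lra. }
  { exists (- x0). rewrite Ropp_involutive. auto. }
  exists (- M). split.
  - intros x Fx. assert (- x <= M) by (apply HM1; rewrite Ropp_involutive; auto). lra.
  - intros e He. apply NNPP. intros Hn.
    assert (M <= - (- M + e)).
    { apply HM2. intros x Fx. apply Rnot_lt_le. intros Hlt.
      apply Hn. exists (- x). split; auto. lra. }
    lra.
Qed.

Lemma lub_ex (F : R -> Prop) (b x0 : R) : F x0 -> (forall x, F x -> x <= b) ->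
  exists m, (forall x, F x -> x <= m) /\ (forall e, 0 < e -> exists x, F x /\ m - e < x).
Proof.
  intros H0 Hb.
  destruct (glb_ex (fun x => F (- x)) (- b) (- x0)) as [m [H1 H2]].
  { rewrite Ropp_involutive; auto. }
  { intros x Fx. specialize (Hb _ Fx). lra. }
  exists (- m). split.
  - intros x Fx. assert (m <= - x) by (apply H1; rewrite Ropp_involutive; auto). lra.
  - intros e He. destruct (H2 e He) as [x [Fx Hx]]. exists (- x). split; auto. lra.
Qed.

Lemma closed_lim (T : R -> Prop) m : closed T ->
  (forall e, 0 < e -> exists x, T x /\ Rabs (x - m) < e) -> T m.
Proof.
  intros HT H. apply HT. intros [eps Heps].
  destruct (H eps (cond_pos eps)) as [x [Tx Hx]]. apply (Heps x); auto.
Qed.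

Lemma sigma_gap (T : R -> Prop) r m : T m -> r < m ->
  (forall x, T x -> r < x -> m <= x) -> Defs.sigma T r = m.
Proof.
  intros Tm Hrm Hg. unfold Defs.sigma.
  rewrite (is_glb_Rbar_unique _ (Finite m)); auto.
  split.
  - intros x [Tx Hx]. simpl. apply Hg; auto.
  - intros b Hb. apply (Hb m). split; auto.
Qed.

Lemma sigma_rd (T : R -> Prop) m :
  (forall d, 0 < d -> exists x, T x /\ m < x < m + d) -> Defs.sigma T m = m.
Proof.
  intros H. unfold Defs.sigma.
  rewrite (is_glb_Rbar_unique _ (Finite m)); auto.
  split.
  - intros x [Tx Hx]. simpl. lra.
  - intros b Hb. destruct b as [b| |]; simpl; auto.
    + apply Rnot_lt_le. intros Hlt.
      destruct (H (b - m)) as [x [Tx Hx]]. lra.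
      specialize (Hb x (conj Tx (proj1 Hx))). simpl in Hb. lra.
    + destruct (H 1) as [x [Tx Hx]]. lra.
      specialize (Hb x (conj Tx (proj1 Hx))). simpl in Hb. auto.
Qed.

Lemma rho_ld (P : R -> Prop) t :
  (forall d, 0 < d -> exists x, P x /\ t - d < x < t) -> rho P t = t.
Proof.
  intros H. unfold rho.
  rewrite (is_lub_Rbar_unique _ (Finite t)); auto.
  split.
  - intros x [Tx Hx]. simpl. lra.
  - intros b Hb. destruct b as [b| |]; simpl; auto.
    + apply Rnot_lt_le. intros Hlt.
      destruct (H (t - b)) as [x [Tx Hx]]. lra.
      specialize (Hb x (conj Tx (proj2 Hx))). simpl in Hb. lra.
    + destruct (H 1) as [x [Tx Hx]]. lra.
      specialize (Hb x (conj Tx (proj2 Hx))). simpl in Hb. auto.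
Qed.

Lemma kappa_lt (P : R -> Prop) s u : P s -> P u -> s < u -> kappa P s.
Proof.
  intros Ps Pu Hsu. split; auto. intros [H _]. specialize (H u Pu). lra.
Qed.

Lemma kappa_ld (P : R -> Prop) s : P s ->
  (forall d, 0 < d -> exists x, P x /\ s - d < x < s) -> kappa P s.
Proof.
  intros Ps H. split; auto. intros [_ H2]. unfold left_scattered in H2.
  rewrite rho_ld in H2; auto. lra.
Qed.

Lemma tind (T : R -> Prop) (HT : closed T) a b (A : R -> Prop) :
  T a -> A a ->
  (forall s, T s -> a <= s < b -> A s ->
     (Defs.sigma T s = s -> exists d, 0 < d /\ forall r, T r -> s < r < s + d -> A r) /\
     (s < Defs.sigma T s -> A (Defs.sigma T s))) ->
  (forall s, T s -> a < s <= b ->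
     (forall d, 0 < d -> exists r, T r /\ a <= r /\ s - d < r < s) ->
     (forall r, T r -> a <= r < s -> A r) -> A s) ->
  forall s, T s -> a <= s <= b -> A s.
Proof.
  intros Ta Aa Hst Hl s0 Ts0 Hs0. apply NNPP. intros Hn.
  set (F := fun x => T x /\ a <= x <= b /\ ~ A x).
  destruct (glb_ex F a s0) as [m [Hm1 Hm2]].
  { unfold F; auto. }
  { intros x [_ [H _]]. lra. }
  assert (Hm0 : a <= m /\ m <= s0).
  { split. apply Rnot_lt_le. intros Hlt. destruct (Hm2 (a - m)) as [x [[_ [Hx _]] Hx']]; lra.
    apply Hm1. unfold F; auto. }
  assert (Tm : T m).
  { apply closed_lim; auto. intros e He. destruct (Hm2 e He) as [x [Fx Hx]].
    exists x. split. destruct Fx; auto. specialize (Hm1 x Fx).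
    rewrite Rabs_right; lra. }
  assert (Hbelow : forall r, T r -> a <= r < m -> A r).
  { intros r Tr Hr. apply NNPP. intros Hnr. assert (F r) by (unfold F; repeat split; auto; lra).
    specialize (Hm1 r H). lra. }
  assert (Am : A m).
  { destruct (Req_dec m a) as [Hma|Hma]. subst m; auto.
    destruct (classic (forall d, 0 < d -> exists r, T r /\ a <= r /\ m - d < r < m)) as [Hld|Hld].
    - apply Hl; auto. lra.
    - apply not_all_ex_not in Hld. destruct Hld as [d Hd].
      apply imply_to_and in Hd. destruct Hd as [Hd Hd'].
      set (G := fun r => T r /\ a <= r < m).
      destruct (lub_ex G m a) as [rh [Hr1 Hr2]].
      { unfold G; split; auto; lra. }
      { intros x [_ Hx]; lra. }
      assert (Hra : a <= rh) by (apply Hr1; unfold G; split; auto; lra).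
      assert (Hrm : rh <= m - d).
      { apply Rnot_lt_le. intros Hlt. destruct (Hr2 (rh - (m - d))) as [x [[Tx Hx] Hx']]. lra.
        apply Hd'. exists x. repeat split; auto; lra. }
      assert (Trh : T rh).
      { apply closed_lim; auto. intros e He. destruct (Hr2 e He) as [x [Gx Hx]].
        exists x. split. destruct Gx; auto. specialize (Hr1 x Gx).
        rewrite Rabs_left1; lra. }
      assert (Hsig : Defs.sigma T rh = m).
      { apply sigma_gap; auto. lra. intros x Tx Hx. apply Rnot_lt_le. intros Hxm.
        assert (G x) by (unfold G; split; auto; lra). specialize (Hr1 x H). lra. }
      assert (Arh : A rh) by (apply Hbelow; auto; lra).
      destruct (Hst rh Trh) as [_ H2]; auto. lra.
      rewrite <- Hsig. apply H2. lra. }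
  assert (Hms : m < s0).
  { destruct (Req_dec m s0). subst m. contradiction. lra. }
  assert (Hrd : forall d, 0 < d -> exists x, T x /\ m < x < m + d).
  { intros d Hd. destruct (Hm2 d Hd) as [x [Fx Hx]]. exists x.
    pose proof (Hm1 x Fx). destruct Fx as [Tx [_ Hnx]]. split; auto. split; auto.
    destruct (Req_dec x m). subst x. contradiction. lra. }
  destruct (Hst m Tm) as [H1 _]. lra. auto.
  destruct (H1 (sigma_rd T m Hrd)) as [d [Hd Hd2]].
  destruct (Hm2 d Hd) as [x [Fx Hx]]. pose proof (Hm1 x Fx).
  destruct Fx as [Tx [_ Hnx]]. apply Hnx. apply Hd2; auto. split; auto.
  destruct (Req_dec x m). subst x. contradiction. lra.
Qed.

Lemma sqrt_le_of_sq (x z : R) : 0 <= z -> x <= z * z -> sqrt x <= z.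
Proof.
  intros Hz H. rewrite <- (sqrt_square z Hz). apply sqrt_le_1_alt; auto.
Qed.

Lemma step_sq y yd p q p1 q1 h : 0 <= h -> Rabs p <= p1 -> Rabs q <= q1 ->
  (y + h*yd)^2 + (yd + h*(-p*yd - q*y))^2 <= ((1 + h*(1+p1+q1))^2) * (y^2+yd^2).
Proof.
  intros Hh Hp Hq.
  pose proof (Rabs_pos p). pose proof (Rabs_pos q).
  set (N := y^2 + yd^2).
  assert (HN : 0 <= N) by (unfold N; nra).
  assert (T1 : y*yd - p*yd^2 - q*y*yd <= (1+p1+q1) * N).
  { assert (y*yd <= N) by (unfold N; nra).
    assert (- p * yd^2 <= p1 * N).
    { assert (-p <= p1) by (pose proof (Rle_abs (-p)); rewrite Rabs_Ropp in *; lra).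
      unfold N. nra. }
    assert (- q * (y * yd) <= q1 * N).
    { assert (Rabs (y*yd) <= N).
      { unfold N. apply Rabs_le. split; nra. }
      apply Rle_trans with (Rabs q * Rabs (y*yd)).
      rewrite <- Rabs_mult. replace (-q*(y*yd)) with (- (q * (y*yd))) by ring.
      rewrite <- Rabs_Ropp. apply Rle_abs.
      apply Rmult_le_compat; auto. apply Rabs_pos. }
    nra. }
  assert (T2 : yd^2 + (p*yd + q*y)^2 <= (1+p1+q1)^2 * N).
  { assert ((p*yd + q*y)^2 <= (p^2 + q^2) * N) by (unfold N; pose proof (pow2_ge_0 (p*y - q*yd)); nra).
    assert (p^2 <= p1^2) by (rewrite <- pow2_abs; nra).
    assert (q^2 <= q1^2) by (rewrite <- pow2_abs; nra).
    assert (yd^2 <= N) by (unfold N; nra).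
    assert (1 + p1^2 + q1^2 <= (1+p1+q1)^2) by nra.
    nra. }
  replace ((y + h*yd)^2 + (yd + h*(-p*yd - q*y))^2) with
    (N + 2*h*(y*yd - p*yd^2 - q*y*yd) + h^2*(yd^2 + (p*yd + q*y)^2)) by (unfold N; ring).
  assert (h^2 * (yd^2 + (p*yd + q*y)^2) <= h^2 * ((1+p1+q1)^2 * N)).
  { apply Rmult_le_compat_l; nra. }
  nra.
Qed.

Lemma step_norm y yd p q p1 q1 h : 0 <= h -> Rabs p <= p1 -> Rabs q <= q1 ->
  sqrt ((y + h*yd)^2 + (yd + h*(-p*yd - q*y))^2) <= (1 + h*(1+p1+q1)) * sqrt (y^2+yd^2).
Proof.
  intros Hh Hp Hq. pose proof (Rabs_pos p). pose proof (Rabs_pos q).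
  apply sqrt_le_of_sq.
  apply Rmult_le_pos. nra. apply sqrt_pos.
  eapply Rle_trans. apply step_sq; eauto.
  right. assert (0 <= y^2+yd^2) by nra.
  pose proof (sqrt_sqrt _ H1) as H2. set (X := y^2+yd^2) in *. rewrite <- H2 at 1. ring.
Qed.

Lemma tri_norm a b e1 e2 : sqrt ((a+e1)^2 + (b+e2)^2) <= sqrt (a^2+b^2) + Rabs e1 + Rabs e2.
Proof.
  assert (HS : 0 <= a^2+b^2) by nra.
  pose proof (sqrt_sqrt _ HS) as HSS. pose proof (sqrt_pos (a^2+b^2)) as HSp.
  set (S := sqrt (a^2+b^2)) in *.
  pose proof (Rabs_pos e1). pose proof (Rabs_pos e2).
  apply sqrt_le_of_sq. lra.
  assert (Ha : Rabs a <= S).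
  { apply Rsqr_incr_0_var. unfold Rsqr. rewrite <- Rabs_mult, Rabs_right by nra. nra. auto. }
  assert (Hb : Rabs b <= S).
  { apply Rsqr_incr_0_var. unfold Rsqr. rewrite <- Rabs_mult, Rabs_right by nra. nra. auto. }
  assert (a * e1 <= S * Rabs e1).
  { apply Rle_trans with (Rabs a * Rabs e1). rewrite <- Rabs_mult. apply Rle_abs.
    apply Rmult_le_compat_r; auto. }
  assert (b * e2 <= S * Rabs e2).
  { apply Rle_trans with (Rabs b * Rabs e2). rewrite <- Rabs_mult. apply Rle_abs.
    apply Rmult_le_compat_r; auto. }
  assert (e1^2 = Rabs e1 * Rabs e1) by (rewrite <- Rabs_mult, Rabs_right by nra; ring).
  assert (e2^2 = Rabs e2 * Rabs e2) by (rewrite <- Rabs_mult, Rabs_right by nra; ring).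
  nra.
Qed.

Theorem theorem2p4
  (T I : R -> Prop) (t0 : R) (p q : R -> R) (p1 q1 : R)
  (y yd ydd phi : R -> R) :
  time_scale T ->
  is_interval I ->
  (I t0 /\ T t0) ->
  rd_continuous T (fun t => I t /\ T t) p ->
  rd_continuous T (fun t => I t /\ T t) q ->
  0 <= p1 -> 0 <= q1 ->
  (forall t, kappa (kappa (fun s => I s /\ T s)) t -> t0 <= t ->
     Rabs (p t) <= p1 /\ Rabs (q t) <= q1) ->
  (forall t, kappa (fun s => I s /\ T s) t -> delta_deriv T y t (yd t)) ->
  (forall t, kappa (kappa (fun s => I s /\ T s)) t ->
     delta_deriv T yd t (ydd t) /\ ydd t + p t * yd t + q t * y t = 0) ->
  is_dexp T (fun _ => 1 + p1 + q1) t0 phi ->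
  forall t, kappa (fun s => I s /\ T s) t -> t0 <= t ->
    sqrt (y t ^ 2 + yd t ^ 2) <= sqrt (y t0 ^ 2 + yd t0 ^ 2) * phi t.
Proof.
  intros [_ HTc] HI [It0 Tt0] _ _ Hp1 Hq1 Hbd Hy Hyd [Hphi0 Hphid] t Hkt Htt.
  set (S := fun s => I s /\ T s) in *.
  set (k1 := 1 + p1 + q1).
  assert (Hk1 : 1 <= k1) by (unfold k1; lra).
  set (n := fun s => sqrt (y s ^ 2 + yd s ^ 2)).
  set (c := n t0).
  assert (Hc : 0 <= c) by apply sqrt_pos.
  assert (St : S t) by (destruct Hkt; auto).
  assert (HS : forall s, T s -> t0 <= s <= t -> S s).
  { intros s Ts Hs. split; auto. apply (HI t0 s t); auto. destruct St; auto. }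
  assert (Tt : T t) by (destruct St; auto).
  assert (Claim : forall eps, 0 < eps -> forall s, T s -> t0 <= s <= t ->
            1 <= phi s /\ n s <= (c + eps * (s - t0)) * phi s).
  { intros eps Heps.
    apply (tind T HTc t0 t); auto.
    - rewrite Hphi0. unfold c. split. lra. rewrite Rminus_diag. lra.
    - intros s Ts Hs [Hf1 Hns].
      assert (K1 : kappa S s) by (apply kappa_lt with t; auto; [apply HS; auto; lra| lra]).
      assert (K2 : kappa (kappa S) s) by (apply kappa_lt with t; auto; lra).
      assert (KT : kappa T s) by (apply kappa_lt with t; auto; lra).
      pose proof (Hy s K1) as Dy. destruct (Hyd s K2) as [Dyd Hode].
      pose proof (Hphid s KT) as Dphi. simpl in Dphi. fold k1 in Dphi.
      destruct (Hbd s K2 (proj1 Hs)) as [Hp Hq].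
      assert (Hdd : ydd s = - p s * yd s - q s * y s) by lra.
      set (C := c + eps * (s - t0)) in *.
      assert (HC : 0 <= C) by (unfold C; nra).
      split.
      + intros Hsig.
        set (eta := eps * phi s / (3 + C + eps)).
        assert (Heta1 : eta * (3 + C + eps) = eps * phi s) by (unfold eta; field; lra).
        assert (Heta : 0 < eta) by (unfold eta; apply Rdiv_lt_0_compat; nra).
        destruct (dd_rd T y s (yd s) Dy Hsig eta Heta) as [d1 [Hd1 H1]].
        destruct (dd_rd T yd s (ydd s) Dyd Hsig eta Heta) as [d2 [Hd2 H2]].
        destruct (dd_rd T phi s (k1 * phi s) Dphi Hsig eta Heta) as [d3 [Hd3 H3]].
        exists (Rmin (Rmin d1 d2) (Rmin d3 1)). split.
        { repeat apply Rmin_pos; lra. }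
        intros r Tr Hr.
        assert (Hm1 := Rmin_l (Rmin d1 d2) (Rmin d3 1)).
        assert (Hm2 := Rmin_r (Rmin d1 d2) (Rmin d3 1)).
        pose proof (Rmin_l d1 d2). pose proof (Rmin_r d1 d2).
        pose proof (Rmin_l d3 1). pose proof (Rmin_r d3 1).
        set (h := r - s).
        assert (Hh : 0 < h < 1) by (unfold h; lra).
        specialize (H1 r Tr ltac:(lra)). specialize (H2 r Tr ltac:(lra)).
        specialize (H3 r Tr ltac:(lra)). fold h in H1, H2, H3.
        set (e1 := y r - y s - yd s * h) in *.
        set (e2 := yd r - yd s - ydd s * h) in *.
        set (e3 := phi r - phi s - k1 * phi s * h) in *.
        assert (Hphir : phi s + h * k1 * phi s - eta * h <= phi r).
        { assert (- e3 <= eta * h) by (pose proof (Rle_abs (-e3)); rewrite Rabs_Ropp in *; lra).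
          unfold e3 in *. lra. }
        assert (Hetaphi : eta < phi s).
        { assert (eta * (3 + C + eps) > eta * 1 * eps) by nra. nra. }
        assert (Hkp : 0 <= h * (k1 * phi s - eta)) by (apply Rmult_le_pos; nra).
        assert (Hf1r : 1 <= phi r) by nra.
        split; auto.
        assert (Hnr : n r <= (1 + h * k1) * (C * phi s) + 2 * eta * h).
        { unfold n.
          replace (y r) with (y s + h * yd s + e1) by (unfold e1; ring).
          replace (yd r) with (yd s + h * (- p s * yd s - q s * y s) + e2)
            by (unfold e2; rewrite Hdd; ring).
          eapply Rle_trans. apply tri_norm.
          pose proof (step_norm (y s) (yd s) (p s) (q s) p1 q1 h ltac:(lra) Hp Hq) as Hst.
          fold k1 in Hst. fold (n s) in Hst.
          assert ((1 + h * k1) * n s <= (1 + h * k1) * (C * phi s)).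
          { apply Rmult_le_compat_l. nra. lra. }
          lra. }
        replace (c + eps * (r - t0)) with (C + eps * h) by (unfold C, h; ring).
        assert (Hkey : eps * (1 + h * k1) * phi s >= eta * (C + eps * h + 2)) by nra.
        assert ((C + eps * h) * ((1 + h * k1) * phi s - eta * h) <= (C + eps * h) * phi r).
        { apply Rmult_le_compat_l; nra. }
        nra.
      + intros Hsig. set (mu := Defs.sigma T s - s).
        assert (Hmu : 0 < mu) by (unfold mu; lra).
        pose proof (dd_sigma T y s (yd s) Dy Ts) as Ey.
        pose proof (dd_sigma T yd s (ydd s) Dyd Ts) as Eyd.
        pose proof (dd_sigma T phi s (k1 * phi s) Dphi Ts) as Ephi.
        fold mu in Ey, Eyd, Ephi.
        split. rewrite Ephi. assert (0 <= k1 * phi s * mu) by (apply Rmult_le_pos; nra). lra.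
        unfold n. rewrite Ey, Eyd, Hdd.
        pose proof (step_norm (y s) (yd s) (p s) (q s) p1 q1 mu ltac:(lra) Hp Hq) as Hst.
        fold k1 in Hst. fold (n s) in Hst.
        replace (y s + yd s * mu) with (y s + mu * yd s) by ring.
        replace (yd s + (- p s * yd s - q s * y s) * mu) with
          (yd s + mu * (- p s * yd s - q s * y s)) by ring.
        eapply Rle_trans. apply Hst.
        replace (c + eps * (Defs.sigma T s - t0)) with (C + eps * mu) by (unfold C, mu; ring).
        rewrite Ephi.
        assert ((1 + mu * k1) * n s <= (1 + mu * k1) * (C * phi s)).
        { apply Rmult_le_compat_l. nra. lra. }
        assert (0 <= eps * mu) by nra.
        assert (0 <= k1 * phi s * mu) by (apply Rmult_le_pos; nra).
        assert (0 <= eps * mu * (phi s + k1 * phi s * mu)) by (apply Rmult_le_pos; lra).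
        nra.
    - intros s Ts Hs Hld Hbelow.
      assert (Ss : S s) by (apply HS; auto; lra).
      assert (K1 : kappa S s).
      { apply kappa_ld; auto. intros d Hd. destruct (Hld d Hd) as [r [Tr [Hr1 Hr2]]].
        exists r. split; auto. apply HS; auto; lra. }
      assert (K2 : kappa (kappa S) s).
      { apply kappa_ld; auto. intros d Hd. destruct (Hld d Hd) as [r [Tr [Hr1 Hr2]]].
        exists r. split; auto. apply kappa_lt with t; auto. apply HS; auto; lra. lra. }
      assert (KT : kappa T s).
      { apply kappa_ld; auto. intros d Hd. destruct (Hld d Hd) as [r [Tr [Hr1 Hr2]]].
        exists r. split; auto. }
      pose proof (Hy s K1) as Dy. destruct (Hyd s K2) as [Dyd _].
      pose proof (Hphid s KT) as Dphi.
      set (C := c + eps * (s - t0)) in *.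
      assert (HC : 0 <= C) by (unfold C; nra).
      assert (Hf : 1 <= phi s).
      { apply eps_le with 1. lra. intros z Hz.
        destruct (dd_cont T phi s _ Dphi Ts z Hz) as [d [Hd Hc3]].
        destruct (Hld d Hd) as [r [Tr [Hr1 Hr2]]].
        destruct (Hbelow r Tr ltac:(lra)) as [Hr _].
        specialize (Hc3 r Tr ltac:(rewrite Rabs_right; lra)).
        pose proof (Rle_abs (phi r - phi s)). lra. }
      split; auto.
      apply eps_le with (C + 2). lra. intros z Hz.
      destruct (dd_cont T phi s _ Dphi Ts z Hz) as [d3 [Hd3 Hc3]].
      destruct (dd_cont T y s _ Dy Ts z Hz) as [d1 [Hd1 Hc1]].
      destruct (dd_cont T yd s _ Dyd Ts z Hz) as [d2 [Hd2 Hc2]].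
      set (d := Rmin (Rmin d1 d2) d3).
      assert (Hd : 0 < d) by (unfold d; repeat apply Rmin_pos; lra).
      pose proof (Rmin_l (Rmin d1 d2) d3). pose proof (Rmin_r (Rmin d1 d2) d3).
      pose proof (Rmin_l d1 d2). pose proof (Rmin_r d1 d2).
      destruct (Hld d Hd) as [r [Tr [Hr1 Hr2]]].
      destruct (Hbelow r Tr ltac:(lra)) as [Hfr Hnr].
      assert (Hsr : Rabs (s - r) < d) by (rewrite Rabs_right; lra).
      specialize (Hc1 r Tr ltac:(unfold d in *; lra)).
      specialize (Hc2 r Tr ltac:(unfold d in *; lra)).
      specialize (Hc3 r Tr ltac:(unfold d in *; lra)).
      pose proof (tri_norm (y r) (yd r) (y s - y r) (yd s - yd r)) as Htri.
      replace (y r + (y s - y r)) with (y s) in Htri by ring.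
      replace (yd r + (yd s - yd r)) with (yd s) in Htri by ring.
      fold (n s) (n r) in Htri.
      rewrite Rabs_minus_sym in Htri. rewrite (Rabs_minus_sym (yd s)) in Htri.
      assert (Hcr : c + eps * (r - t0) <= C) by (unfold C; nra).
      assert ((c + eps * (r - t0)) * phi r <= C * phi r) by nra.
      assert (phi r <= phi s + z) by (pose proof (Rle_abs (phi r - phi s)); lra).
      assert (C * phi r <= C * (phi s + z)) by nra.
      nra. }
  destruct (Claim 1 ltac:(lra) t Tt (conj Htt (Rle_refl t))) as [Hft _].
  fold (n t). apply eps_le with ((t - t0) * phi t). nra.
  intros z Hz. destruct (Claim z Hz t Tt (conj Htt (Rle_refl t))) as [_ H]. eapply Rle_trans; [apply H|]. change (sqrt (y t0 ^ 2 + yd t0 ^ 2)) with c. right; ring.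
Qed.
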